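(* Let $G$ be a graph, $X\subseteq T\subseteq V(G)$, $k'$ an integer, and let $(L^*,R^* )$ be a lean $(X,T,k')$-witness. Let $T'=(T\setminus L^* )\cup(L^*\cap R^* )$. Then the adhesion of $T'$ is at most $\max(|L^*\cap R^*|,\sigma(T))$, and $|T|-|T'|\ge \frac{|L^*\cap T|}{2\max\{1,|L^*\cap R^*|\}}$.
   Context: A vertex cut of $G$ is an ordered pair $(L,R)$ with $L\cup R=V(G)$, $L\setminus R,R\setminus L\ne\emptyset$ and no edge between $L\setminus R$ and $R\setminus L$. The adhesion $\sigma(Z)$ of a set $Z$ is the maximum over connected components $C$ of $G\setminus Z$ of $|N_G(C)|$. An $(X,T,k')$-witness is a vertex cut $(L,R)$ of $G$ with $|L\cap R|\le k'$, $|L\cap T|>|L\cap R|$, and $X\subseteq R$. It is lean if there exist $|L\cap R|$ vertex-disjoint paths in $G[L]$, one starting from each vertex of $L\cap R$, each ending at a vertex of $L\cap T$. *)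

(* Defs.v *)
From mathcomp Require Import all_boot all_order all_algebra.
Set Implicit Arguments. Unset Strict Implicit. Unset Printing Implicit Defensive.

Definition simple_graph (V : finType) (e : rel V) :=
  symmetric e /\ irreflexive e.

Section Graph.
Variables (V : finType) (e : rel V).

Definition rel_minus (Z : {set V}) : rel V :=
  [rel x y | [&& e x y, x \notin Z & y \notin Z]].

(* the connected component of G \ Z containing v (meaningful when v \notin Z) *)
Definition comp_of (Z : {set V}) (v : V) : {set V} :=
  [set u | connect (rel_minus Z) v u].

Definition nbh (C : {set V}) : {set V} :=
  [set u | (u \notin C) && [exists c in C, e c u]].

(* adhesion sigma(Z) = max over components C of G \ Z of |N_G(C)| (0 if none) *)
Definition adhesion (Z : {set V}) : nat :=
  \max_(v | v \notin Z) #|nbh (comp_of Z v)|.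

Definition vertex_cut (L R : {set V}) : Prop :=
  [/\ L :|: R = setT, L :\: R != set0, R :\: L != set0 &
      forall x y, x \in L :\: R -> y \in R :\: L -> ~~ e x y].

Definition witness (X T : {set V}) (k' : int) (L R : {set V}) : Prop :=
  [/\ vertex_cut L R, (#|L :&: R|%:Z <= k')%R,
      #|L :&: T| > #|L :&: R| & X \subset R].

(* lean: |L∩R| vertex-disjoint paths in G[L], one from each s in L∩R
   (the path s :: p s), each ending in L∩T *)
Definition lean (T L R : {set V}) : Prop :=
  exists p : V -> seq V,
    (forall s, s \in L :&: R ->
       [/\ path e s (p s), all (mem L) (s :: p s) & last s (p s) \in T]) /\
    (forall s s', s \in L :&: R -> s' \in L :&: R -> s != s' ->
       [disjoint [seq x | x <- s :: p s] & [seq x | x <- s' :: p s']]).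

End Graph.

(* Main.v *)
Require Import Defs.
From mathcomp Require Import all_boot all_order all_algebra.
From mathcomp Require Import zify.
Import GRing.Theory Num.Theory.

Lemma conn_inv (V : finType) (r r' : rel V) (P : pred V) :
  (forall x y, P x -> r x y -> r' x y && P y) ->
  forall x y, P x -> connect r x y -> connect r' x y && P y.
Proof.
move=> H x y Px /connectP [p pth ->].
elim: p x Px pth => [|z p IH] x Px /=; first by rewrite connect0.
case/andP=> rxz pth; have /andP[r'xz Pz] := H _ _ Px rxz.
have /andP[c Pl] := IH z Pz pth.
by rewrite (connect_trans (connect1 r'xz) c) Pl.
Qed.

Lemma rmP (V : finType) (e : rel V) (Z : {set V}) x y :
  rel_minus e Z x y = [&& e x y, x \notin Z & y \notin Z].
Proof. by []. Qed.

Fixpoint firstin {V : Type} (P : pred V) (x : V) (s : seq V) : V :=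
  match s with [::] => x | y :: s' => if P y then y else firstin P y s' end.

Lemma hit (V : finType) (e : rel V) (T : {set V}) x s :
  path e x s -> x \notin T -> last x s \in T ->
  let z := firstin (mem T) x s in
  [/\ z \in T, z \in x :: s & exists c, connect (rel_minus e T) x c /\ e c z].
Proof.
elim: s x => [|y s IH] x /=; first by move=> _ /negbTE ->.
case/andP=> exy pth xT lT.
case: ifP => yT.
  by split => //; [rewrite !inE eqxx orbT | exists x; rewrite connect0].
have [zT zin [c [cc ec]]] := IH y pth (negbT yT) lT.
split => //; first by rewrite inE zin orbT.
exists c; split => //; apply: connect_trans cc.
apply: connect1; rewrite /rel_minus /=; apply/and3P; split => //; by rewrite yT.
Qed.

Theorem lemma5p8 (V : finType) (e : rel V) (X T : {set V}) (k' : int)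
    (Ls Rs : {set V}) :
  simple_graph e ->
  X \subset T ->
  witness e X T k' Ls Rs ->
  lean e T Ls Rs ->
  let T' := (T :\: Ls) :|: (Ls :&: Rs) in
  adhesion e T' <= maxn #|Ls :&: Rs| (adhesion e T) /\
  ((#|T|%:R - #|T'|%:R : rat) >=
     #|Ls :&: T|%:R / (2 * maxn 1 #|Ls :&: Rs|)%:R)%R.
Proof.
move=> [esym eirr] _ [[LR LRn RLn cut] _ hLT _] [p [hp hdisj]] T'.
have cut' : forall x y, x \in Rs :\: Ls -> y \in Ls :\: Rs -> ~~ e x y.
  by move=> x y hx hy; rewrite esym; apply: cut.
have inLR : forall x, x \in Ls :|: Rs by move=> x; rewrite LR inE.
split.
  apply/bigmax_leqP => v vT'.
  set C := comp_of e T' v.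
  have CT' : forall u, u \in C -> u \notin T'.
    move=> u; rewrite inE => cu.
    have := @conn_inv _ (rel_minus e T') (rel_minus e T') (fun x => x \notin T').
    move=> /(_ _ v u vT' cu) /andP[] // => x y _ /=.
    by move=> h; apply/andP; split => //; case/and3P: h.
  have nbC : forall u, u \in nbh e C -> u \in T'.
    move=> u; rewrite inE => /andP[uC /existsP[c /andP[cC ecu]]].
    apply/negPn/negP => uT'; move/negP: uC; apply.
    move: (cC); rewrite !inE => cc; apply: connect_trans cc _.
    by apply: connect1; rewrite rmP ecu uT' (CT' c cC).
  case vLR: (v \in Ls :\: Rs).
    have CL : forall u, u \in C -> u \in Ls :\: Rs.
      move=> u; rewrite inE => cu.
      have := @conn_inv _ (rel_minus e T') (rel_minus e T') (mem (Ls :\: Rs)).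
      move=> /(_ _ v u vLR cu) /andP[] // => x y /= xLR /and3P[exy xT yT].
      rewrite rmP exy xT yT /=.
      have := inLR y; rewrite !inE in xLR yT * => /orP[yL|yR].
        by move: yT; rewrite yL /=; case: (y \in Rs).
      case yL: (y \in Ls); first by move: yT; rewrite yL yR orbT.
      by move: (cut x y); rewrite !inE xLR yL yR exy => /(_ isT isT).
    apply: leq_trans (leq_maxl _ _).
    apply: subset_leq_card; apply/subsetP => u un.
    have uT' := nbC u un.
    move: un; rewrite inE => /andP[_ /existsP[c /andP[cC ecu]]].
    have cLR := CL c cC.
    have uL : u \in Ls.
      case uL: (u \in Ls) => //.
      have := inLR u; rewrite inE uL /= => uR.
      by move: (cut c u cLR); rewrite !inE uL uR ecu => /(_ isT).
    by move: uT'; rewrite !inE uL /=.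
  have vRL : v \in Rs :\: Ls.
    move: vT' vLR; rewrite !inE; have := inLR v; rewrite inE.
    by case: (v \in Ls); case: (v \in Rs) => //=; rewrite ?orbT ?andbF.
  have RLnT : forall x, x \in Rs :\: Ls -> x \notin T' -> x \notin T.
    by move=> x; rewrite !inE => /andP[/negbTE -> _] /=; rewrite orbF.
  have CC : forall u, u \in C ->
      connect (rel_minus e T) v u && (u \in Rs :\: Ls).
    move=> u; rewrite inE => cu.
    apply: (@conn_inv _ (rel_minus e T') (rel_minus e T) (mem (Rs :\: Ls))) => //.
    move=> x y /= xRL /and3P[exy xT yT].
    have yRL : y \in Rs :\: Ls.
      have := inLR y; rewrite !inE in yT * => /orP[yL|yR].
        case yR: (y \in Rs); first by move: yT; rewrite yL yR orbT.
        by move: (cut' x y xRL); rewrite !inE yL yR exy => /(_ isT).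
      case yL: (y \in Ls) => //=.
      by move: yT; rewrite yL yR orbT.
    by rewrite rmP exy (RLnT x) // (RLnT y).
  have vT : v \notin T by apply: RLnT.
  set C' := comp_of e T v.
  have C'T : forall u, u \in C' -> u \notin T.
    move=> u; rewrite inE => cu.
    have := @conn_inv _ (rel_minus e T) (rel_minus e T) (fun x => x \notin T).
    move=> /(_ _ v u vT cu) /andP[] // => x y _ /=.
    by move=> h; apply/andP; split => //; case/and3P: h.
  apply: leq_trans (leq_maxr _ _).
  rewrite /adhesion; have hh := (@leq_bigmax_cond V (fun v => v \notin T) (fun v => #|nbh e (comp_of e T v)|) v vT); apply: (leq_trans _ hh).
  pose f u := if u \in T then u else firstin (mem T) u (p u).
  have nbS : forall u, u \in nbh e C -> u \notin T -> u \in Ls :&: Rs.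
    move=> u un uT; have := nbC u un; rewrite !inE (negbTE uT) /=.
    by rewrite andbC.
  have fP : forall u, u \in nbh e C -> u \notin T ->
    [/\ f u \in T, f u \in u :: p u, all (mem Ls) (u :: p u) &
        exists c, connect (rel_minus e T) u c /\ e c (f u)].
    move=> u un uT; have [pth allL lT] := hp u (nbS u un uT).
    have [h1 h2 h3] := @hit _ _ _ _ _ pth uT lT.
    by rewrite /f (negbTE uT); split.
  rewrite -(card_in_imset (f := f)).
    apply: subset_leq_card; apply/subsetP => z /imsetP[u un ->].
    move: (un); rewrite inE => /andP[_ /existsP[c /andP[cC ecu]]].
    have /andP[vc _] := CC c cC.
    have cT : c \notin T by apply: (C'T c); rewrite inE.
    case uT: (u \in T).
      rewrite /f uT inE; apply/andP; split.
        by apply/negP => /C'T; rewrite uT.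
      by apply/existsP; exists c; rewrite ecu andbT inE.
    have [fT fin _ [c' [cc' ec']]] := fP u un (negbT uT).
    rewrite inE; apply/andP; split.
      by apply/negP => /C'T; rewrite fT.
    apply/existsP; exists c'; rewrite ec' andbT inE.
    apply: connect_trans cc'; apply: connect_trans vc _.
    by apply: connect1; rewrite rmP ecu cT uT.
  have key : forall u1 u2, u1 \in nbh e C -> u2 \in nbh e C ->
      u1 \in T -> u2 \notin T -> f u1 = f u2 -> False.
    move=> u1 u2 u1n u2n u1T u2T.
    have [fT fin allL _] := fP u2 u2n u2T.
    rewrite {1}/f u1T => eq; rewrite -eq in fin.
    have := nbC u1 u1n; rewrite inE => /orP[|u1S].
      rewrite inE => /andP[/negP u1L _]; apply: u1L.
      by move/allP: allL; apply.
    have ne : u1 != u2 by apply/eqP => eq'; move: u2T; rewrite -eq' u1T.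
    have := hdisj _ _ u1S (nbS u2 u2n u2T) ne; rewrite !map_id => d.
    by move: (disjointFr d (mem_head u1 (p u1))); rewrite fin.
  move=> u1 u2 u1n u2n; case u1T: (u1 \in T); case u2T: (u2 \in T).
  - by rewrite /f u1T u2T.
  - by move=> eq; case: (key u1 u2 u1n u2n) => //; rewrite u2T.
  - by move=> eq; case: (key u2 u1 u2n u1n) => //; rewrite u1T.
  move=> eq; apply/eqP; apply/negPn/negP => ne.
  have [f1T f1in _ _] := fP u1 u1n (negbT u1T).
  have [f2T f2in _ _] := fP u2 u2n (negbT u2T).
  have := hdisj _ _ (nbS u1 u1n (negbT u1T)) (nbS u2 u2n (negbT u2T)) ne.
  rewrite !map_id => d.
  by move: (disjointFr d f1in); rewrite eq f2in.
have hT : #|T| = #|Ls :&: T| + #|T :\: Ls| by rewrite setIC cardsID.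
have hT' : #|T'| = #|T :\: Ls| + #|Ls :&: Rs|.
  rewrite /T' cardsU.
  suff -> : (T :\: Ls) :&: (Ls :&: Rs) = set0 by rewrite cards0 subn0.
  by apply/setP => x; rewrite !inE; case: (x \in Ls); rewrite ?andbF.
rewrite hT hT'.
move: hLT; set a := #|Ls :&: T|; set s := #|Ls :&: Rs|; set d := #|T :\: Ls|.
move=> hLT.
have -> : (((a + d)%:R - (d + s)%:R : rat) = (a - s)%N%:R)%R.
  by rewrite natrB ?(ltnW hLT) // !natrD opprD addrA addrK.
rewrite ler_pdivrMr ?ltr0n; last by lia.
rewrite -natrM ler_nat.
nia.
Qed.
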